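(* Suppose $K\in C^2([-1,0])$ with $K_p>0$ is such that $h(q,p)=K(p)$ solves the height equation, and that $\mathscr S(K)=\mathscr S(H)$. Then $$\int_{-1}^0\frac{(K_p-H_p)^3}{H_p^2K_p^2}\,dp=0.$$
   Context: Fix $\alpha\in(0,1)$, $\rho\in C^{2+\alpha}([-1,0])$ with $\rho>0$, $\rho_p\le0$, $H\in C^{3+\alpha}([-1,0])$ with $H(-1)=0$, $H(0)=1$, $H_p>0$, and $F>0$. With $R=\mathbb R\times(-1,0)$, $T=\{p=0\}$, $B=\{p=-1\}$, the height equation for $h$ is $\big(-\frac{1+h_q^2}{2h_p^2}+\frac1{2H_p^2}\big)_p+\big(\frac{h_q}{h_p}\big)_q-\frac1{F^2}\rho_p(h-H)=0$ in $R$, $\frac{1+h_q^2}{2h_p^2}-\frac1{2H_p^2}+\frac1{F^2}\rho(h-1)=0$ on $T$, $h=0$ on $B$. The flow force of a $q$-independent $h=K(p)$ is $\mathscr S(K)=\int_{-1}^0\Big[\frac1{2K_p^2}+\frac1{2H_p^2}-\frac1{F^2}\rho(K-H)-\frac1{F^2}\int_0^p\rho H_p\,dp'\Big]K_p\,dp$. *)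

(* Defs.v *)
From Stdlib Require Import Reals.
From Coquelicot Require Import Coquelicot.
Open Scope R_scope.

(* The closed interval [-1,0] (the p-range of the strip R = IR x (-1,0) together with T and B). *)
Definition Icl (p : R) : Prop := -1 <= p <= 0.

Definition deriv_on (f f' : R -> R) : Prop :=
  forall x, Icl x ->
    filterlim (fun y => (f y - f x) / (y - x))
      (within (fun y => Icl y /\ y <> x) (locally x)) (locally (f' x)).

Definition cont_on (f : R -> R) : Prop :=
  forall x, Icl x -> filterlim f (within Icl (locally x)) (locally (f x)).

Definition holder_on (alpha : R) (f : R -> R) : Prop :=
  exists C, forall x y, Icl x -> Icl y -> x <> y ->
    Rabs (f x - f y) <= C * Rpower (Rabs (x - y)) alpha.

Definition C2_on (f f1 f2 : R -> R) : Prop :=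
  deriv_on f f1 /\ deriv_on f1 f2 /\ cont_on f2.

Definition C2a_on (alpha : R) (f f1 f2 : R -> R) : Prop :=
  C2_on f f1 f2 /\ holder_on alpha f2.

Definition C3a_on (alpha : R) (f f1 f2 f3 : R -> R) : Prop :=
  deriv_on f f1 /\ deriv_on f1 f2 /\ deriv_on f2 f3 /\ cont_on f3 /\
  holder_on alpha f3.

(* Classical solution h(q,p) of the height equation, with background data
   rho (derivative rhop), H (derivative Hp) and Froude number F:
     ( -(1+h_q^2)/(2h_p^2) + 1/(2H_p^2) )_p + (h_q/h_p)_q - rho_p (h-H)/F^2 = 0  in R,
     (1+h_q^2)/(2h_p^2) - 1/(2H_p^2) + rho (h-1)/F^2 = 0                       on T,
     h = 0                                                                    on B.
   hq, hp are the first partial derivatives of h on the closure of R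
   (hp one-sided at p = -1, 0). *)
Definition height_eq (F : R) (rho rhop H Hp : R -> R) (h : R -> R -> R) : Prop :=
  exists hq hp : R -> R -> R,
    (forall q p, Icl p -> is_derive (fun t => h t p) q (hq q p)) /\
    (forall q, deriv_on (fun s => h q s) (fun s => hp q s)) /\
    (forall q p, Icl p -> hp q p <> 0) /\
    (forall q p, -1 < p < 0 ->
       exists A B,
         is_derive (fun s => - (1 + (hq q s)^2) / (2 * (hp q s)^2)
                             + 1 / (2 * (Hp s)^2)) p A /\
         is_derive (fun t => hq t p / hp t p) q B /\
         A + B - / F^2 * rhop p * (h q p - H p) = 0) /\
    (forall q, (1 + (hq q 0)^2) / (2 * (hp q 0)^2) - 1 / (2 * (Hp 0)^2)
               + / F^2 * rho 0 * (h q 0 - 1) = 0) /\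
    (forall q, h q (-1) = 0).

Definition flow_force (F : R) (rho H Hp : R -> R) (K Kp : R -> R) : R :=
  RInt (fun p =>
     (1 / (2 * (Kp p)^2) + 1 / (2 * (Hp p)^2) - / F^2 * rho p * (K p - H p)
      - / F^2 * RInt (fun p' => rho p' * Hp p') 0 p) * Kp p) (-1) 0.

(* Main.v *)
Require Import Defs.
From Stdlib Require Import Reals Lra.
From Coquelicot Require Import Coquelicot.
Open Scope R_scope.
Notation cR := (@continuous R_UniformSpace R_UniformSpace).
Lemma ball_R (x e y : R) : ball x e y <-> Rabs (y - x) < e.
Proof. unfold ball; simpl; unfold AbsRing_ball, abs, minus, plus, opp; simpl. tauto. Qed.
Lemma cplus (f g : R -> R) x : cR f x -> cR g x -> cR (fun y => f y + g y) x.
Proof. apply (continuous_plus (V:=R_NormedModule)). Qed.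
Lemma cminus (f g : R -> R) x : cR f x -> cR g x -> cR (fun y => f y - g y) x.
Proof. apply (continuous_minus (V:=R_NormedModule)). Qed.
Lemma cmult (f g : R -> R) x : cR f x -> cR g x -> cR (fun y => f y * g y) x.
Proof. apply (continuous_mult (K:=R_AbsRing)). Qed.
Lemma copp (f : R -> R) x : cR f x -> cR (fun y => - f y) x.
Proof. apply (continuous_opp (V:=R_NormedModule)). Qed.
Lemma cinv (f : R -> R) x : cR f x -> f x <> 0 -> cR (fun y => / f y) x.
Proof. apply continuous_Rinv_comp. Qed.
Lemma cconst (a x : R) : cR (fun _ => a) x.
Proof. apply continuous_const. Qed.

Ltac ctac := repeat match goal with
  | |- cR (fun y => ?a) _ => match a with context [y] => fail 1 | _ => apply cconst end
  | |- cR (fun y => _ - _) _ => apply cminus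
  | |- cR (fun y => _ + _) _ => apply cplus
  | |- cR (fun y => _ * _) _ => apply cmult
  | |- cR (fun y => - _) _ => apply copp
  | |- cR (fun y => / _) _ => apply cinv
  | H : forall x, cR ?f x |- cR ?f _ => apply H
  | H : forall x, cR ?f x |- cR (fun y => ?f y) _ => apply H
  end.

Ltac toR := match goal with |- ?a = ?b => change (@eq R a b) end.

Definition clamp (x : R) : R := Rmax (-1) (Rmin 0 x).
Definition cl (f : R -> R) (x : R) : R := f (clamp x).

Lemma clamp_Icl x : Icl (clamp x).
Proof. unfold clamp, Icl, Rmax, Rmin. repeat destruct Rle_dec; lra. Qed.
Lemma clamp_id x : Icl x -> clamp x = x.
Proof. unfold clamp, Icl, Rmax, Rmin. intros. repeat destruct Rle_dec; lra. Qed.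
Lemma clamp_lip x y : Rabs (clamp y - clamp x) <= Rabs (y - x).
Proof. unfold clamp, Rmax, Rmin. unfold Rabs; repeat destruct Rle_dec; repeat destruct Rcase_abs; lra. Qed.

Lemma cont_cl f : cont_on f -> forall x, cR (cl f) x.
Proof.
  intros Hf x. unfold continuous, cl. apply filterlim_locally. intros eps.
  destruct (proj1 (filterlim_locally _ _) (Hf (clamp x) (clamp_Icl x)) eps) as [d Hd].
  exists d. intros y Hy. apply Hd.
  - apply ball_R. apply ball_R in Hy. eapply Rle_lt_trans; [apply clamp_lip|exact Hy].
  - apply clamp_Icl.
Qed.

Lemma deriv_cont f g : deriv_on f g -> cont_on f.
Proof.
  intros Hd x Hx. apply filterlim_locally. intros eps.
  destruct (proj1 (filterlim_locally _ _) (Hd x Hx) (mkposreal 1 Rlt_0_1)) as [d Hd1].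
  assert (Hg := Rabs_pos (g x)).
  assert (Hpos : 0 < eps / (Rabs (g x) + 1)).
  { apply Rdiv_lt_0_compat; [apply cond_pos| lra]. }
  exists (mkposreal _ (Rmin_pos _ _ (cond_pos d) Hpos)). intros y Hy Iy. simpl in Hy.
  apply ball_R in Hy. apply ball_R.
  destruct (Req_dec y x) as [->|Hne]. { rewrite Rminus_eq_0, Rabs_R0. apply cond_pos. }
  assert (Hb : ball x d y). { apply ball_R. eapply Rlt_le_trans; [exact Hy| apply Rmin_l]. }
  assert (Hq := Hd1 y Hb (conj Iy Hne)). apply (proj1 (ball_R _ _ _)) in Hq. simpl in Hq.
  set (q := (f y - f x) / (y - x)) in *.
  assert (E : f y - f x = q * (y - x)) by (unfold q; field; contradict Hne; lra).
  rewrite E, Rabs_mult.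
    assert (Hq' : Rabs q < Rabs (g x) + 1). { pose proof (Rabs_triang_inv q (g x)). lra. }
  assert (Hyx : Rabs (y - x) < eps / (Rabs (g x) + 1)) by (eapply Rlt_le_trans; [exact Hy|apply Rmin_r]).
  apply (Rmult_lt_compat_r (Rabs (g x)+1)) in Hyx; [|lra].
  unfold Rdiv in Hyx; rewrite Rmult_assoc, Rinv_l, Rmult_1_r in Hyx; [|lra].
  pose proof (Rabs_pos (y-x)). pose proof (Rabs_pos q). nra.
Qed.

Lemma deriv_int f g x : deriv_on f g -> -1 < x < 0 -> is_derive (cl f) x (g x).
Proof.
  intros Hd Hx. apply is_derive_Reals. intros eps Heps.
  assert (Ix : Icl x) by (unfold Icl; lra).
  destruct (proj1 (filterlim_locally _ _) (Hd x Ix) (mkposreal eps Heps)) as [d Hd1].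
  assert (Hm : 0 < Rmin d (Rmin (x+1) (-x))).
  { apply Rmin_pos; [apply cond_pos|apply Rmin_pos; lra]. }
  exists (mkposreal _ Hm). intros h Hh0 Hh. simpl in Hh.
  assert (h1 : Rabs h < d) by (eapply Rlt_le_trans; [exact Hh| apply Rmin_l]).
  assert (h2 : Rabs h < Rmin (x+1) (-x)) by (eapply Rlt_le_trans; [exact Hh| apply Rmin_r]).
  assert (Ixh : Icl (x+h)).
  { unfold Icl. pose proof (Rmin_l (x+1) (-x)); pose proof (Rmin_r (x+1) (-x)).
    unfold Rabs in h2; destruct Rcase_abs; lra. }
  unfold cl. rewrite (clamp_id _ Ixh), (clamp_id _ Ix).
  assert (Hb : ball x d (x+h)) by (apply ball_R; replace (x+h-x) with h by ring; exact h1).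
  assert (Hne : x + h <> x) by (intro E; apply Hh0; lra).
  specialize (Hd1 _ Hb (conj Ixh Hne)). apply (proj1 (ball_R _ _ _)) in Hd1. simpl in Hd1.
  replace (x+h-x) with h in Hd1 by ring. exact Hd1.
Qed.

Lemma deriv_uniq f g1 g2 x : deriv_on f g1 -> deriv_on f g2 -> Icl x -> g1 x = g2 x.
Proof.
  intros H1 H2 Hx.
  assert (PF : ProperFilter' (within (fun y => Icl y /\ y <> x) (locally x))).
  { constructor.
    - unfold within. intros [e He]. unfold Icl in *.
      pose proof (cond_pos e) as He0.
      set (t := Rmin e 1 / 2).
      assert (Ht : 0 < t /\ t < e /\ t <= 1/2).
      { unfold t. pose proof (Rmin_l e 1); pose proof (Rmin_r e 1).
        assert (0 < Rmin e 1) by (apply Rmin_pos; lra). lra. }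
      destruct (Rle_dec x (-1/2)).
      + apply (He (x + t)).
        * apply ball_R. replace (x + t - x) with t by ring. rewrite Rabs_pos_eq; lra.
        * split; lra.
      + apply (He (x - t)).
        * apply ball_R. replace (x - t - x) with (- t) by ring. rewrite Rabs_Ropp, Rabs_pos_eq; lra.
        * split; lra.
    - apply within_filter, locally_filter. }
  exact (filterlim_locally_unique _ _ _ (H1 x Hx) (H2 x Hx)).
Qed.

Lemma is_derive_eq (f : R -> R) x l l' : is_derive f x l -> l = l' -> is_derive f x l'.
Proof. intros H ->. exact H. Qed.

Lemma psi_deriv (P D rh G RE : R -> R) c x p d r g e :
  is_derive P x p -> is_derive D x d -> is_derive rh x r -> is_derive G x g ->
  is_derive RE x e ->
  is_derive (fun t => - c * (P t * D t) - c / 2 * (rh t * (D t * D t)) + / 2 * (G t * D t) - RE t) x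
    (- c * (p * D x + P x * d) - c / 2 * (r * (D x * D x) + rh x * (2 * D x * d))
     + / 2 * (g * D x + G x * d) - e).
Proof.
  intros HP HD Hr HG HE.
  assert (E1 : Derive (fun t => P t) x = p) by exact (is_derive_unique _ _ _ HP).
  assert (E2 : Derive (fun t => D t) x = d) by exact (is_derive_unique _ _ _ HD).
  assert (E3 : Derive (fun t => rh t) x = r) by exact (is_derive_unique _ _ _ Hr).
  assert (E4 : Derive (fun t => G t) x = g) by exact (is_derive_unique _ _ _ HG).
  assert (E5 : Derive (fun t => RE t) x = e) by exact (is_derive_unique _ _ _ HE).
  auto_derive.
  - repeat split; eexists; eassumption.
  - rewrite E1, E2, E3, E4, E5. field.
Qed.

Lemma loc_int x : -1 < x < 0 -> locally x (fun t => -1 < t < 0).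
Proof.
  intros Hx. assert (Hm : 0 < Rmin (x+1) (-x)) by (apply Rmin_pos; lra).
  exists (mkposreal _ Hm). intros y Hy. apply (proj1 (ball_R _ _ _)) in Hy. simpl in Hy.
  pose proof (Rmin_l (x+1) (-x)); pose proof (Rmin_r (x+1) (-x)).
  unfold Rabs in Hy; destruct Rcase_abs; lra.
Qed.

Lemma RInt_cont_derive (f : R -> R) a : (forall x, cR f x) -> forall x, is_derive (RInt f a) x (f x).
Proof.
  intros Hf x. apply (is_derive_RInt f (RInt f a) a); [|apply Hf].
  apply filter_forall. intro b. apply (RInt_correct (V:=R_CompleteNormedModule)), (ex_RInt_continuous (V:=R_CompleteNormedModule)). intros; apply Hf.
Qed.

Lemma RInt_comb (f g h : R -> R) a b : ex_RInt f a b -> ex_RInt g a b -> ex_RInt h a b ->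
  RInt (fun x => f x - g x - / 4 * h x) a b = RInt f a b - RInt g a b - / 4 * RInt h a b.
Proof.
  intros ef eg eh.
  assert (ex1 : ex_RInt (fun x => minus (f x) (g x)) a b) by (apply (ex_RInt_minus (V:=R_CompleteNormedModule)); assumption).
  assert (ex2 : ex_RInt (fun x => scal (/4) (h x)) a b) by (apply (ex_RInt_scal (V:=R_CompleteNormedModule)); assumption).
  pose proof (RInt_minus _ _ _ _ ex1 ex2) as E1.
  pose proof (RInt_minus _ _ _ _ ef eg) as E2.
  pose proof (RInt_scal h a b (/4) eh) as E3.
  etransitivity. exact E1.
  etransitivity. apply (f_equal2 minus); [exact E2|exact E3].
  reflexivity.
Qed.

Theorem lemma4p9
  (alpha F : R) (rho rhop rhopp H Hp Hpp Hppp K Kp Kpp : R -> R)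
  (Halpha : 0 < alpha < 1)
  (Hrho : C2a_on alpha rho rhop rhopp)
  (Hrho_pos : forall p, Icl p -> 0 < rho p)
  (Hrhop : forall p, Icl p -> rhop p <= 0)
  (HH : C3a_on alpha H Hp Hpp Hppp)
  (HHm1 : H (-1) = 0) (HH0 : H 0 = 1)
  (HHp : forall p, Icl p -> 0 < Hp p)
  (HF : 0 < F)
  (HK : C2_on K Kp Kpp)
  (HKp : forall p, Icl p -> 0 < Kp p)
  (Hsol : height_eq F rho rhop H Hp (fun _ p => K p))
  (HS : flow_force F rho H Hp K Kp = flow_force F rho H Hp H Hp) :
  RInt (fun p => (Kp p - Hp p)^3 / ((Hp p)^2 * (Kp p)^2)) (-1) 0 = 0.
Proof.
  destruct HK as [dK [dKp _]].
  destruct HH as [dH [dHp _]].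
  destruct Hrho as [[drho _] _].
  destruct Hsol as [hq [hp [Hhq [Hhp [_ [Hint [Htop Hbot]]]]]]].
  cbv beta in Hint, Htop, Hbot.
  assert (hq0 : forall q p, Icl p -> hq q p = 0).
  { intros q p Hp0. rewrite <- (is_derive_unique _ _ _ (Hhq q p Hp0)). apply Derive_const. }
  assert (hpK : forall q p, Icl p -> hp q p = Kp p).
  { intros q p Hp0. exact (deriv_uniq _ _ _ _ (Hhp q) dK Hp0). }
  set (c := / F ^ 2) in *.
  assert (cK : forall x, cR (cl K) x) by exact (cont_cl _ (deriv_cont _ _ dK)).
  assert (cH : forall x, cR (cl H) x) by exact (cont_cl _ (deriv_cont _ _ dH)).
  assert (cKp : forall x, cR (cl Kp) x) by exact (cont_cl _ (deriv_cont _ _ dKp)).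
  assert (cHp : forall x, cR (cl Hp) x) by exact (cont_cl _ (deriv_cont _ _ dHp)).
  assert (crho : forall x, cR (cl rho) x) by exact (cont_cl _ (deriv_cont _ _ drho)).
  assert (pK : forall x, 0 < cl Kp x) by (intro; apply HKp, clamp_Icl).
  assert (pH : forall x, 0 < cl Hp x) by (intro; apply HHp, clamp_Icl).
  assert (cRH : forall x, cR (fun y => cl rho y * cl Hp y) x) by (intro; ctac).
  pose (Pc := RInt (fun y => cl rho y * cl Hp y) 0).
  assert (dPc : forall x, is_derive Pc x (cl rho x * cl Hp x)) by exact (RInt_cont_derive _ 0 cRH).
  assert (cPc : forall x, cR Pc x) by (intro x; apply (ex_derive_continuous (V:=R_NormedModule)); eexists; apply dPc).
  pose (Gc := fun x => - / (2 * (cl Kp x * cl Kp x)) + / (2 * (cl Hp x * cl Hp x))).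
  pose (Dc := fun x => cl K x - cl H x).
  pose (AK := fun x => (/ (2 * (cl Kp x * cl Kp x)) + / (2 * (cl Hp x * cl Hp x))
       - c * cl rho x * (cl K x - cl H x) - c * Pc x) * cl Kp x).
  pose (AH := fun x => (/ (2 * (cl Hp x * cl Hp x)) + / (2 * (cl Hp x * cl Hp x))
       - c * cl rho x * (cl H x - cl H x) - c * Pc x) * cl Hp x).
  pose (E4 := fun x => (cl Kp x - cl Hp x) * ((cl Kp x - cl Hp x) * (cl Kp x - cl Hp x))
       * / ((cl Hp x * cl Hp x) * (cl Kp x * cl Kp x))).
  pose (Ec := fun x => AK x - AH x - / 4 * E4 x).
  assert (nz : forall x, 2 * (cl Kp x * cl Kp x) <> 0 /\ 2 * (cl Hp x * cl Hp x) <> 0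
             /\ (cl Hp x * cl Hp x) * (cl Kp x * cl Kp x) <> 0).
  { intro x. specialize (pK x); specialize (pH x). repeat split; apply Rgt_not_eq; repeat apply Rmult_lt_0_compat; lra. }
  assert (cAK : forall x, cR AK x) by (intro x; unfold AK; ctac; apply nz).
  assert (cAH : forall x, cR AH x) by (intro x; unfold AH; ctac; apply nz).
  assert (cE4 : forall x, cR E4 x) by (intro x; unfold E4; ctac; apply nz).
  assert (cEc : forall x, cR Ec x) by (intro x; unfold Ec; ctac).
  assert (cGc : forall x, cR Gc x) by (intro x; unfold Gc; ctac; apply nz).
  assert (dRE : forall x, is_derive (RInt Ec (-1)) x (Ec x)) by exact (RInt_cont_derive _ (-1) cEc).
  assert (cRE : forall x, cR (RInt Ec (-1)) x).
  { intro x; apply (ex_derive_continuous (V:=R_NormedModule)); eexists; apply dRE. }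
  pose (Psi := fun t => - c * (Pc t * Dc t) - c / 2 * (cl rho t * (Dc t * Dc t)) + / 2 * (Gc t * Dc t) - RInt Ec (-1) t).
  assert (cDc : forall x, cR Dc x) by (intro x; unfold Dc; ctac).
  assert (cPsi : forall x, cR Psi x) by (intro x; unfold Psi; ctac).
  assert (dPsi : forall x, -1 < x < 0 -> is_derive Psi x 0).
  { intros x Hx. assert (Ix : Icl x) by (unfold Icl; lra).
    destruct (Hint 0 x Hx) as [A [B [HA [HB HAB]]]].
    assert (HB0 : B = 0).
    { assert (H0 : is_derive (fun t => hq t x / hp t x) 0 0).
      { apply (is_derive_ext (fun _ => 0)).
        - intro t. rewrite (hq0 t x Ix). unfold Rdiv. rewrite Rmult_0_l. reflexivity.
        - apply (is_derive_const (V:=R_NormedModule)). }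
      rewrite <- (is_derive_unique _ _ _ HB). exact (is_derive_unique _ _ _ H0). }
    assert (dG : is_derive Gc x A).
    { eapply is_derive_ext_loc; [|exact HA].
      apply (filter_imp (fun t => -1 < t < 0)); [|apply loc_int; exact Hx].
      intros t Ht. assert (It : Icl t) by (unfold Icl; lra).
      unfold Gc, cl. rewrite (hq0 0 t It), (hpK 0 t It), (clamp_id _ It).
      assert (0 < Kp t) by (apply HKp; exact It). assert (0 < Hp t) by (apply HHp; exact It).
      toR. field. split; lra. }
    assert (dD : is_derive Dc x (Kp x - Hp x)).
    { apply (is_derive_minus (V:=R_NormedModule)); apply deriv_int; assumption. }
    eapply is_derive_eq.
    { apply (psi_deriv Pc Dc (cl rho) Gc (RInt Ec (-1))).
      - apply dPc. - exact dD. - apply deriv_int; [exact drho|exact Hx]. - exact dG. - apply dRE. }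
    assert (HA' : A = c * rhop x * (K x - H x)).
    { rewrite HB0 in HAB. lra. }
    rewrite HA'. unfold Ec, AK, AH, E4, Dc, Gc, cl. rewrite (clamp_id _ Ix).
    assert (0 < Kp x) by (apply HKp; exact Ix). assert (0 < Hp x) by (apply HHp; exact Ix).
    toR. field. split; lra. }
  assert (I0 : Icl 0) by (unfold Icl; lra).
  assert (Im1 : Icl (-1)) by (unfold Icl; lra).
  destruct (MVT_gen Psi (-1) 0 (fun _ => 0)) as [c0 [_ Hc0]].
  { intros x Hx. apply dPsi. unfold Rmin, Rmax in Hx; destruct Rle_dec; lra. }
  { intros x _. apply continuity_pt_filterlim, cPsi. }
  assert (Pc0 : Pc 0 = 0) by (unfold Pc; apply (RInt_point (V:=R_CompleteNormedModule))).
  assert (RE0 : RInt Ec (-1) (-1) = 0) by apply (RInt_point (V:=R_CompleteNormedModule)).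
  assert (Dm1 : Dc (-1) = 0).
  { unfold Dc, cl. rewrite (clamp_id _ Im1), (Hbot 0), HHm1. ring. }
  assert (G0 : Gc 0 = c * cl rho 0 * Dc 0).
  { specialize (Htop 0). rewrite (hq0 0 0 I0), (hpK 0 0 I0) in Htop.
    unfold Gc, Dc, cl. rewrite (clamp_id _ I0), HH0.
    assert (0 < Kp 0) by (apply HKp; exact I0). assert (0 < Hp 0) by (apply HHp; exact I0).
    replace ((1 + 0 ^ 2) / (2 * Kp 0 ^ 2)) with (/ (2 * (Kp 0 * Kp 0))) in Htop by (field; lra).
    replace (1 / (2 * Hp 0 ^ 2)) with (/ (2 * (Hp 0 * Hp 0))) in Htop by (field; lra).
    lra. }
  assert (REz : RInt Ec (-1) 0 = 0).
  { unfold Psi in Hc0. rewrite Pc0, RE0, Dm1, G0 in Hc0. toR. ring_simplify in Hc0. lra. }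
  assert (exAK : ex_RInt AK (-1) 0) by (apply (ex_RInt_continuous (V:=R_CompleteNormedModule)); intros; apply cAK).
  assert (exAH : ex_RInt AH (-1) 0) by (apply (ex_RInt_continuous (V:=R_CompleteNormedModule)); intros; apply cAH).
  assert (exE4 : ex_RInt E4 (-1) 0) by (apply (ex_RInt_continuous (V:=R_CompleteNormedModule)); intros; apply cE4).
  assert (Dec : RInt Ec (-1) 0 = RInt AK (-1) 0 - RInt AH (-1) 0 - / 4 * RInt E4 (-1) 0).
  { apply RInt_comb; assumption. }
  assert (FK : flow_force F rho H Hp K Kp = RInt AK (-1) 0).
  { unfold flow_force. fold c. apply RInt_ext. intros x Hx.
    rewrite Rmin_left, Rmax_right in Hx by lra. assert (Ix : Icl x) by (unfold Icl; lra).
    rewrite (RInt_ext (fun p' => rho p' * Hp p') (fun y => cl rho y * cl Hp y) 0 x).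
    2: { intros y Hy. assert (Iy : Icl y) by (unfold Rmin, Rmax in Hy; destruct Rle_dec; unfold Icl; lra).
         unfold cl. rewrite (clamp_id _ Iy). reflexivity. }
    change (RInt (fun y => cl rho y * cl Hp y) 0 x) with (Pc x).
    unfold AK, cl. rewrite (clamp_id _ Ix).
    assert (0 < Kp x) by (apply HKp; exact Ix). assert (0 < Hp x) by (apply HHp; exact Ix).
    toR. field. lra. }
  assert (FH : flow_force F rho H Hp H Hp = RInt AH (-1) 0).
  { unfold flow_force. fold c. apply RInt_ext. intros x Hx.
    rewrite Rmin_left, Rmax_right in Hx by lra. assert (Ix : Icl x) by (unfold Icl; lra).
    rewrite (RInt_ext (fun p' => rho p' * Hp p') (fun y => cl rho y * cl Hp y) 0 x).
    2: { intros y Hy. assert (Iy : Icl y) by (unfold Rmin, Rmax in Hy; destruct Rle_dec; unfold Icl; lra).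
         unfold cl. rewrite (clamp_id _ Iy). reflexivity. }
    change (RInt (fun y => cl rho y * cl Hp y) 0 x) with (Pc x).
    unfold AH, cl. rewrite (clamp_id _ Ix).
    assert (0 < Hp x) by (apply HHp; exact Ix).
    toR. field. lra. }
  assert (T : RInt (fun p => (Kp p - Hp p)^3 / ((Hp p)^2 * (Kp p)^2)) (-1) 0 = RInt E4 (-1) 0).
  { apply RInt_ext. intros x Hx.
    rewrite Rmin_left, Rmax_right in Hx by lra. assert (Ix : Icl x) by (unfold Icl; lra).
    unfold E4, cl. rewrite (clamp_id _ Ix).
    assert (0 < Kp x) by (apply HKp; exact Ix). assert (0 < Hp x) by (apply HHp; exact Ix).
    toR. field. split; lra. }
  rewrite T. rewrite FK, FH in HS. rewrite Dec, HS in REz. toR. lra.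
Qed.
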